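(* Let $n\ge 4$ and $k\ge 2$. There is an intersecting family $\mathcal{F}\subseteq\mathcal{I}_{n,k}^3$ with $\bigcap_{F\in\mathcal{F}}F=\emptyset$ and $|\mathcal{F}| = |\mathcal{H}_{n,k}^3|$ that is not isomorphic to $\mathcal{H}_{n,k}^3$.
   Context: $\Gamma_{n,k}$ is the disjoint union of $n$ copies of $K_k$, with vertices $(i,j)$, $i\in[n]$ the copy, $j\in[k]$ the vertex within it. $\mathcal{I}_{n,k}^r$ is the set of independent sets of size $r$ in $\Gamma_{n,k}$. A family is intersecting if every two members meet. Families are isomorphic if one is the image of the other under an automorphism of $\Gamma_{n,k}$. For $r\le n-1$, with $H=\{(2,1),\dots,(r+1,1)\}$, $\mathcal{H}_{n,k}^r = \{ F \in \mathcal{I}_{n,k}^r : (1,1)\in F,\ F \cap H \neq \emptyset \} \cup \{H\}$. *)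

(* Defs.v *)
From mathcomp Require Import all_boot all_fingroup.
Set Implicit Arguments. Unset Strict Implicit. Unset Printing Implicit Defensive.

(* Vertices of Gamma_{n,k}: (i,j) with i : copy (0-indexed), j : vertex in copy. *)
Definition vert (n k : nat) : finType := ('I_n * 'I_k)%type.

Definition adj (n k : nat) (u v : vert n k) : bool :=
  (u.1 == v.1) && (u.2 != v.2).

Definition independent (n k : nat) (A : {set vert n k}) : bool :=
  [forall u in A, forall v in A, ~~ adj u v].

Definition Indep (n k r : nat) : {set {set vert n k}} :=
  [set A : {set vert n k} | independent A && (#|A| == r)].

Definition intersecting (n k : nat) (F : {set {set vert n k}}) : Prop :=
  forall A B, A \in F -> B \in F -> A :&: B != set0.

Definition is_aut (n k : nat) (s : {perm vert n k}) : Prop :=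
  forall u v, adj (s u) (s v) = adj u v.

Definition fam_iso (n k : nat) (F G : {set {set vert n k}}) : Prop :=
  exists s : {perm vert n k}, is_aut s /\ [set s @: (A : {set vert n k}) | A in F] = G.

(* The vertex (1,1) of the paper, i.e. (0,0) 0-indexed. *)
Definition is11 (n k : nat) (v : vert n k) : bool :=
  (nat_of_ord v.1 == 0) && (nat_of_ord v.2 == 0).

(* H = {(2,1),...,(r+1,1)} (paper's 1-indexing). *)
Definition Hset (n k r : nat) : {set vert n k} :=
  [set v : vert n k | (1 <= nat_of_ord v.1 <= r) && (nat_of_ord v.2 == 0)].

Definition Hfam (n k r : nat) : {set {set vert n k}} :=
  [set F in Indep n k r | [exists v in F, is11 v] && (F :&: Hset n k r != set0)]
  :|: [set Hset n k r].

(* Main.v *)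
Require Import Defs.
From mathcomp Require Import all_boot all_fingroup.
Set Implicit Arguments. Unset Strict Implicit. Unset Printing Implicit Defensive.

Definition pt (n k i j : nat) (hi : i < n.+4) (hj : j < k.+2) : vert n.+4 k.+2 :=
  (Ordinal hi, Ordinal hj).
Definition p0 n k := @pt n k 0 0 isT isT.
Definition h1 n k := @pt n k 1 0 isT isT.
Definition h2 n k := @pt n k 2 0 isT isT.
Definition h3 n k := @pt n k 3 0 isT isT.
Definition h3' n k := @pt n k 3 1 isT isT.

Definition tnat (i : nat) := if i == 0 then 1 else if i == 1 then 0 else
  if i == 2 then 3 else if i == 3 then 2 else i.
Lemma tnat_lt n i : i < n.+4 -> tnat i < n.+4.
Proof. by case: i => [|[|[|[|i]]]]. Qed.
Lemma tnatK i : tnat (tnat i) = i.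
Proof. by case: i => [|[|[|[|i]]]]. Qed.
Definition tau n (i : 'I_n.+4) : 'I_n.+4 := Ordinal (tnat_lt (ltn_ord i)).
Lemma tauK n : cancel (@tau n) (@tau n).
Proof. by move=> i; apply: val_inj; rewrite /= tnatK. Qed.
Definition sig n k (v : vert n.+4 k.+2) : vert n.+4 k.+2 := (tau v.1, v.2).
Arguments sig {n k}.
Arguments tau {n}.
Lemma sigK n k : cancel (@sig n k) (@sig n k).
Proof. by case=> i j; rewrite /sig /= tauK. Qed.
Lemma adj_sig n k (u v : vert n.+4 k.+2) : adj (sig u) (sig v) = adj u v.
Proof. by rewrite /adj /= (inj_eq (can_inj (@tauK n))). Qed.
Lemma sig_p0 n k : sig (p0 n k) = h1 n k. Proof. by apply/eqP. Qed.
Lemma sig_h1 n k : sig (h1 n k) = p0 n k. Proof. by apply/eqP. Qed.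
Lemma sig_h2 n k : sig (h2 n k) = h3 n k. Proof. by apply/eqP. Qed.
Lemma sig_h3 n k : sig (h3 n k) = h2 n k. Proof. by apply/eqP. Qed.

Lemma Hset_mem n k x : (x \in Hset n.+4 k.+2 3) =
  [|| x == h1 n k, x == h2 n k | x == h3 n k].
Proof.
case: x => [[[|[|[|[|i]]]] hi] [[|j] hj]]; rewrite inE //=.
Qed.
Lemma is11_mem n k (A : {set vert n.+4 k.+2}) : [exists v in A, is11 v] = (p0 n k \in A).
Proof.
apply/existsP/idP => [[v /andP[hv]]|h]; last by exists (p0 n k); rewrite h.
by case: v hv => [[[|i] hi] [[|j] hj]] //= hv _; congr (_ \in A): hv; congr pair; apply: val_inj.
Qed.
Lemma t3 n k : h3 n k != h3' n k. Proof. by []. Qed.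
Lemma cards3 (T : finType) (a b c : T) : a != b -> a != c -> b != c -> #|[set a; b; c]| = 3.
Proof. move=> ab ac bc. by rewrite setUC cardsU1 cards2 !inE ab ![c == _]eq_sym (negbTE ac) (negbTE bc). Qed.

Lemma mem3 (T : finType) (a b c x : T) : x \in [set a; b; c] -> [\/ x = a, x = b | x = c].
Proof. by rewrite !inE => /orP[/orP[]|]/eqP->; [constructor 1|constructor 2|constructor 3]. Qed.

Lemma indep3 n k (a b c : vert n k) : a.1 != b.1 -> a.1 != c.1 -> b.1 != c.1 ->
  [set a; b; c] \in Indep n k 3.
Proof.
move=> ab ac bc.
have ba : b.1 != a.1 by rewrite eq_sym.
have ca : c.1 != a.1 by rewrite eq_sym.
have cb : c.1 != b.1 by rewrite eq_sym.
have nab : a != b by apply: contraNneq ab => ->.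
have nac : a != c by apply: contraNneq ac => ->.
have nbc : b != c by apply: contraNneq bc => ->.
rewrite inE cards3 // eqxx andbT.
apply/forallP => u; apply/implyP => /mem3[]->;
apply/forallP => v; apply/implyP => /mem3[]->;
rewrite /adj ?eqxx ?andbF // ?(negbTE ab) ?(negbTE ac) ?(negbTE bc) //
  ?(negbTE ba) ?(negbTE ca) ?(negbTE cb) //.
Qed.

Lemma indep_pre n k (A : {set vert n.+4 k.+2}) :
  (sig @^-1: A \in Indep n.+4 k.+2 3) = (A \in Indep n.+4 k.+2 3).
Proof.
suff H : forall B : {set vert n.+4 k.+2}, B \in Indep n.+4 k.+2 3 -> sig @^-1: B \in Indep n.+4 k.+2 3.
  apply/idP/idP => [h|]; last exact: H.
  have E : sig @^-1: (sig @^-1: A) = A by apply/setP => x; rewrite !inE sigK.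
  by rewrite -E; apply: H.
move=> B; rewrite !inE card_preimset; last exact: (can_inj (@sigK n k)).
case/andP => /forallP hB ->; rewrite andbT.
apply/forallP => u; apply/implyP; rewrite inE => hu.
apply/forallP => v; apply/implyP; rewrite inE => hv.
rewrite -adj_sig. by have := hB (sig u); rewrite hu /= => /forallP/(_ (sig v)); rewrite hv.
Qed.

Definition pairT n k (A : {set vert n.+4 k.+2}) :=
  [|| (p0 n k \in A) && (h1 n k \in A), (p0 n k \in A) && (h2 n k \in A) | (h1 n k \in A) && (h2 n k \in A)].
Definition Fam n k : {set {set vert n.+4 k.+2}} := [set A in Indep n.+4 k.+2 3 | pairT A].
Definition Dset n k (A : {set vert n.+4 k.+2}) :=
  ((h1 n k \in A) && (h2 n k \in A) && (p0 n k \notin A) && (h3 n k \notin A)) ||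
  ((p0 n k \in A) && (h3 n k \in A) && (h1 n k \notin A) && (h2 n k \notin A)).
Definition fA n k (A : {set vert n.+4 k.+2}) := if Dset A then sig @^-1: A else A.

Lemma pre_mem n k (A : {set vert n.+4 k.+2}) :
  [/\ (p0 n k \in sig @^-1: A) = (h1 n k \in A), (h1 n k \in sig @^-1: A) = (p0 n k \in A),
      (h2 n k \in sig @^-1: A) = (h3 n k \in A) & (h3 n k \in sig @^-1: A) = (h2 n k \in A)].
Proof. by rewrite !inE sig_p0 sig_h1 sig_h2 sig_h3. Qed.

Lemma fAK n k : cancel (@fA n k) (@fA n k).
Proof.
move=> A; rewrite {2}/fA; case: ifP => hD; last by rewrite /fA hD.
case: (pre_mem A) => e0 e1 e2 e3.
have hD' : Dset (sig @^-1: A).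
  move: hD; rewrite /Dset e0 e1 e2 e3.
  by case: (p0 n k \in A); case: (h1 n k \in A); case: (h2 n k \in A); case: (h3 n k \in A).
rewrite /fA hD'.
by apply/setP => x; rewrite !inE sigK.
Qed.

Lemma Hset_eq n k : Hset n.+4 k.+2 3 = [set h1 n k; h2 n k; h3 n k].
Proof. by apply/setP => x; rewrite Hset_mem !inE orbA. Qed.

Lemma Hset_ind n k : Hset n.+4 k.+2 3 \in Indep n.+4 k.+2 3.
Proof. by rewrite Hset_eq; apply: indep3. Qed.

Lemma full3 n k (A : {set vert n.+4 k.+2}) : A \in Indep n.+4 k.+2 3 ->
  h1 n k \in A -> h2 n k \in A -> h3 n k \in A -> A = Hset n.+4 k.+2 3.
Proof.
rewrite inE => /andP[_ /eqP cA] a1 a2 a3.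
apply/esym/eqP; rewrite eqEcard Hset_eq cards3 // cA leqnn andbT.
by apply/subsetP => x /mem3[]->.
Qed.

Lemma Hfam_mem n k (A : {set vert n.+4 k.+2}) : (A \in Hfam n.+4 k.+2 3) =
  ((A \in Indep n.+4 k.+2 3) && ((p0 n k \in A) && [|| h1 n k \in A, h2 n k \in A | h3 n k \in A]))
  || (A == Hset n.+4 k.+2 3).
Proof.
rewrite !inE is11_mem; congr (_ && (_ && _) || _).
apply/set0Pn/idP => [[x]|].
  by rewrite in_setI Hset_mem => /andP[hx /or3P[]/eqP ex]; rewrite -ex hx ?orbT.
by case/or3P => h; [exists (h1 n k)|exists (h2 n k)|exists (h3 n k)];
  rewrite in_setI h Hset_mem eqxx ?orbT.
Qed.

Lemma key n k (A : {set vert n.+4 k.+2}) : (A \in Hfam n.+4 k.+2 3) = (fA A \in Fam n k).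
Proof.
rewrite Hfam_mem; case: eqP => [->|hne].
  have hD : Dset (Hset n.+4 k.+2 3) = false by rewrite /Dset !Hset_mem.
  by rewrite orbT /fA hD /Fam inE Hset_ind /pairT !Hset_mem.
have hI : ~~ [&& A \in Indep n.+4 k.+2 3, h1 n k \in A, h2 n k \in A & h3 n k \in A].
  by apply/negP => /and4P[a b c d]; apply: hne; apply: full3.
rewrite orbF /fA /Fam; case: ifP => hD; rewrite [_ \in [set _ in _ | _]]inE.
  case: (pre_mem A) => e0 e1 e2 e3.
  rewrite indep_pre /pairT ?e0 ?e1 ?e2 ?e3.
  move: hD hI; rewrite /Dset;
  by case: (A \in Indep _ _ _); case: (p0 n k \in A); case: (h1 n k \in A); case: (h2 n k \in A); case: (h3 n k \in A).
move: hD hI; rewrite /Dset /pairT;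
by case: (A \in Indep _ _ _); case: (p0 n k \in A); case: (h1 n k \in A); case: (h2 n k \in A); case: (h3 n k \in A).
Qed.

Lemma card_eq n k : #|Fam n k| = #|Hfam n.+4 k.+2 3|.
Proof.
have -> : Hfam n.+4 k.+2 3 = @fA n k @^-1: Fam n k by apply/setP => A; rewrite key [in RHS]inE.
by rewrite card_preimset //; apply: (can_inj (@fAK n k)).
Qed.

Lemma famI n k : intersecting (Fam n k).
Proof.
move=> A B; rewrite !inE => /andP[_ pA] /andP[_ pB].
have : [|| (p0 n k \in A) && (p0 n k \in B), (h1 n k \in A) && (h1 n k \in B)
          | (h2 n k \in A) && (h2 n k \in B)].
  move: pA pB; rewrite /pairT.
  by case: (p0 n k \in A); case: (h1 n k \in A); case: (h2 n k \in A);
     case: (p0 n k \in B); case: (h1 n k \in B); case: (h2 n k \in B).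
by case/or3P => /andP[a b]; apply/set0Pn; [exists (p0 n k)|exists (h1 n k)|exists (h2 n k)];
  rewrite in_setI a b.
Qed.

Definition T_ n k := [set p0 n k; h1 n k; h2 n k].
Definition S0 n k := [set h1 n k; h2 n k; h3 n k].
Definition S1 n k := [set p0 n k; h2 n k; h3 n k].
Definition S2 n k := [set p0 n k; h1 n k; h3 n k].
Definition S0' n k := [set h1 n k; h2 n k; h3' n k].
Definition S1' n k := [set p0 n k; h2 n k; h3' n k].
Definition S2' n k := [set p0 n k; h1 n k; h3' n k].

Lemma memF n k : [/\ T_ n k \in Fam n k, S0 n k \in Fam n k, S1 n k \in Fam n k,
  S2 n k \in Fam n k & [/\ S0' n k \in Fam n k, S1' n k \in Fam n k & S2' n k \in Fam n k]].
Proof.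
by split; try split; rewrite /Fam inE indep3 // /pairT !inE.
Qed.

Lemma capF n k : \bigcap_(A in Fam n k) A = set0.
Proof.
apply/setP => x; rewrite inE; apply/negP => /bigcapP H.
case: (memF n k) => mT m0 m1 m2 _.
have := H _ mT; have := H _ m0; have := H _ m1; have := H _ m2.
by rewrite !inE; case: eqP => [->|_] //; case: eqP => [->|_] //; case: eqP => [->|_] //;
  rewrite ?orbF //= => _ _ _ /orP[]/eqP ->.
Qed.

Lemma two_miss n k (v : vert n.+4 k.+2) : exists A B, [/\ A \in Fam n k, B \in Fam n k,
  A != B, v \notin A & v \notin B].
Proof.
case: (memF n k) => mT m0 m1 m2 [m0' m1' m2'].
case: (v =P p0 n k) => [->|v0]; first by exists (S0 n k), (S0' n k); split => //;
  [apply/eqP => E; have := congr1 (fun S : {set vert n.+4 k.+2} => h3 n k \in S) E| |]; rewrite !inE.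
case: (v =P h1 n k) => [->|v1]; first by exists (S1 n k), (S1' n k); split => //;
  [apply/eqP => E; have := congr1 (fun S : {set vert n.+4 k.+2} => h3 n k \in S) E| |]; rewrite !inE.
case: (v =P h2 n k) => [->|v2]; first by exists (S2 n k), (S2' n k); split => //;
  [apply/eqP => E; have := congr1 (fun S : {set vert n.+4 k.+2} => h3 n k \in S) E| |]; rewrite !inE.
case: (v =P h3 n k) => [->|v3]; first by exists (T_ n k), (S0' n k); split => //;
  [apply/eqP => E; have := congr1 (fun S : {set vert n.+4 k.+2} => p0 n k \in S) E| |]; rewrite !inE.
exists (T_ n k), (S0 n k); split => //; last by rewrite !inE; do !case: eqP.
  by apply/eqP => E; have := congr1 (fun S : {set vert n.+4 k.+2} => p0 n k \in S) E; rewrite !inE.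
by rewrite !inE; do !case: eqP.
Qed.
Unset Implicit Arguments.

Theorem lemma3p2 (n k : nat) :
  4 <= n -> 2 <= k ->
  exists F : {set {set vert n k}},
    [/\ F \subset Indep n k 3,
        intersecting F,
        \bigcap_(A in F) A = set0,
        #|F| = #|Hfam n k 3| &
        ~ fam_iso F (Hfam n k 3)].
Proof.
case: n => [|[|[|[|n]]]] // _; case: k => [|[|k]] // _.
exists (Fam n k); split.
- by apply/subsetP => A /setIdP[].
- exact: famI.
- exact: capF.
- exact: card_eq.
case=> s [_ E].
set v := (s^-1)%g (p0 n k).
have inH : forall C, C \in Fam n k -> v \notin C -> s @: C = Hset n.+4 k.+2 3.
  move=> C hC hv.
  have : s @: C \in Hfam n.+4 k.+2 3 by rewrite -E; apply: imset_f.
  have e : p0 n k = s v by rewrite /v permKV.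
  rewrite Hfam_mem e mem_imset; last exact: perm_inj.
  by rewrite (negbTE hv) andbF /= => /eqP.
have [A [B [hA hB hAB vA vB]]] := two_miss v.
move/eqP: hAB; apply; apply: (imset_inj (@perm_inj _ s)).
by rewrite (inH _ hA vA) (inH _ hB vB).
Qed.
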